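(* Let $L,B>0$ satisfy $$2A^2:=\pi^2\Big[\frac{3}{L^2}+\frac{1}{4B^2}\Big]-1>0,$$ and let $u_0$ satisfy $$\|u_0\|^2<\frac{A^2}{2\pi^2\big(\frac{1}{L^2}+\frac{1}{4B^2}\big)}.$$ Suppose $u\in L^\infty(0,\infty;H^1_0(\Omega))$ is a solution of $$u_t+u_x+u^2u_x+u_{xxx}+u_{xyy}=0\text{ in }\Omega\times(0,\infty),\quad u(x,\pm B,t)=0,\quad u(0,y,t)=u(L,y,t)=u_x(L,y,t)=0,\quad u(\cdot,0)=u_0,$$ regular enough that multiplying the equation by $u$ and by $(1+x)u$ and integrating by parts over $\Omega$ is justified. Then for all $t\ge0$, $$\|u\|^2(t)\le\big(1+x,u^2\big)(t)\le e^{-\frac{A^2}{1+L}t}\big(1+x,u_0^2\big).$$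
   Context: $\Omega=(0,L)\times(-B,B)$, $\|\cdot\|$ is the $L^2(\Omega)$ norm, and $\big(1+x,w^2\big)(t):=\int_\Omega(1+x)\,w^2(x,y,t)\,dx\,dy$. *)

(* Defs.v *)
From Stdlib Require Import Reals Lra ClassicalEpsilon.
Open Scope R_scope.

(* Riemann integral of f over [a,b] as a total function: the value of the
   Riemann integral if f is Riemann integrable on [a,b] (well defined since
   RiemannInt does not depend on the integrability proof), otherwise an
   unspecified real. *)
Definition Integ (f : R -> R) (a b : R) : R :=
  epsilon (inhabits 0%R)
    (fun I => exists pr : Riemann_integrable f a b, RiemannInt pr = I).

Definition IntOmega (L B : R) (F : R -> R -> R) : R :=
  Integ (fun x => Integ (fun y => F x y) (- B) B) 0 L.

Definition norm2 (L B : R) (w : R -> R -> R) : R :=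
  IntOmega L B (fun x y => (w x y) ^ 2).

Definition wnorm2 (L B : R) (w : R -> R -> R) : R :=
  IntOmega L B (fun x y => (1 + x) * (w x y) ^ 2).

Definition cont3 (f : R -> R -> R -> R) : Prop :=
  forall x y t eps, 0 < eps -> exists delta, 0 < delta /\
    forall x' y' t', Rabs (x' - x) < delta -> Rabs (y' - y) < delta ->
      Rabs (t' - t) < delta -> Rabs (f x' y' t' - f x y t) < eps.

Definition dx_is (f g : R -> R -> R -> R) : Prop :=
  forall x y t, derivable_pt_lim (fun s => f s y t) x (g x y t).
Definition dy_is (f g : R -> R -> R -> R) : Prop :=
  forall x y t, derivable_pt_lim (fun s => f x s t) y (g x y t).
Definition dt_is (f g : R -> R -> R -> R) : Prop :=
  forall x y t, derivable_pt_lim (fun s => f x y s) t (g x y t).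

(* Main.v *)
Require Import Defs.
From Stdlib Require Import Reals Lra Psatz ClassicalEpsilon Classical.
From Coquelicot Require Import Coquelicot.
Open Scope R_scope.

Lemma Integ_RInt f a b : ex_RInt f a b -> Integ f a b = RInt f a b.
Proof.
  intros H. unfold Integ.
  assert (Hex : exists I, exists pr : Riemann_integrable f a b, RiemannInt pr = I).
  { exists (RInt f a b). exists (ex_RInt_Reals_0 _ _ _ H). symmetry; apply RInt_Reals. }
  destruct (epsilon_spec (inhabits 0) _ Hex) as [pr Hpr].
  rewrite <- Hpr. symmetry. apply RInt_Reals.
Qed.

Lemma D_plus (f g : R -> R) (x df dg : R) : is_derive f x df -> is_derive g x dg ->
  is_derive (fun s => f s + g s) x (df + dg).
Proof. intros; apply (is_derive_plus f g); auto. Qed.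
Lemma D_minus (f g : R -> R) (x df dg : R) : is_derive f x df -> is_derive g x dg ->
  is_derive (fun s => f s - g s) x (df - dg).
Proof. intros; apply (is_derive_minus f g); auto. Qed.
Lemma D_mult (f g : R -> R) (x df dg : R) : is_derive f x df -> is_derive g x dg ->
  is_derive (fun s => f s * g s) x (df * g x + f x * dg).
Proof. intros; apply (is_derive_mult f g); auto. intros; apply Rmult_comm. Qed.
Lemma D_const (c x : R) : is_derive (fun _ : R => c) x 0.
Proof. exact (@is_derive_const R_AbsRing R_NormedModule c x). Qed.
Lemma D_id (x : R) : is_derive (fun s : R => s) x 1.
Proof. exact (@is_derive_id R_AbsRing x). Qed.
Lemma D_val (f : R -> R) (x l l' : R) : is_derive f x l -> l = l' -> is_derive f x l'.
Proof. intros H ->; exact H. Qed.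

Lemma cont3_comp h f1 f2 f3 : cont3 h -> cont3 f1 -> cont3 f2 -> cont3 f3 ->
  cont3 (fun x y t => h (f1 x y t) (f2 x y t) (f3 x y t)).
Proof.
  intros Hh H1 H2 H3 x y t eps Heps.
  destruct (Hh (f1 x y t) (f2 x y t) (f3 x y t) eps Heps) as [d [Hd Hd']].
  destruct (H1 x y t d Hd) as [d1 [Hd1 Hd1']].
  destruct (H2 x y t d Hd) as [d2 [Hd2 Hd2']].
  destruct (H3 x y t d Hd) as [d3 [Hd3 Hd3']].
  exists (Rmin d1 (Rmin d2 d3)). split.
  { apply Rmin_pos; auto; apply Rmin_pos; auto. }
  intros x' y' t' Hx Hy Ht.
  pose proof (Rmin_l d1 (Rmin d2 d3)). pose proof (Rmin_r d1 (Rmin d2 d3)).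
  pose proof (Rmin_l d2 d3). pose proof (Rmin_r d2 d3).
  apply Hd'; [apply Hd1'|apply Hd2'|apply Hd3']; lra.
Qed.

Lemma cont3_p1 : cont3 (fun x _ _ => x).
Proof. intros x y t eps He; exists eps; split; auto. Qed.
Lemma cont3_p2 : cont3 (fun _ y _ => y).
Proof. intros x y t eps He; exists eps; split; auto. Qed.
Lemma cont3_p3 : cont3 (fun _ _ t => t).
Proof. intros x y t eps He; exists eps; split; auto. Qed.
Lemma cont3_const c : cont3 (fun _ _ _ => c).
Proof. intros x y t eps He; exists 1; split; [lra|]. intros. rewrite Rminus_eq_0, Rabs_R0; auto. Qed.

Lemma cont3_of_2d (phi : R -> R -> R) : (forall a b, continuity_2d_pt phi a b) ->
  cont3 (fun a b _ => phi a b).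
Proof.
  intros H x y t eps He.
  destruct (H x y (mkposreal eps He)) as [d Hd].
  exists d; split; [apply cond_pos|]. intros; apply Hd; auto.
Qed.

Lemma cont3_plus f g : cont3 f -> cont3 g -> cont3 (fun x y t => f x y t + g x y t).
Proof.
  intros Hf Hg.
  apply (cont3_comp (fun a b _ => a + b) f g (fun _ _ _ => 0)); auto using cont3_const.
  apply cont3_of_2d. intros; apply continuity_2d_pt_plus;
    [apply continuity_2d_pt_id1|apply continuity_2d_pt_id2].
Qed.
Lemma cont3_minus f g : cont3 f -> cont3 g -> cont3 (fun x y t => f x y t - g x y t).
Proof.
  intros Hf Hg.
  apply (cont3_comp (fun a b _ => a - b) f g (fun _ _ _ => 0)); auto using cont3_const.
  apply cont3_of_2d. intros; apply continuity_2d_pt_minus;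
    [apply continuity_2d_pt_id1|apply continuity_2d_pt_id2].
Qed.
Lemma cont3_mult f g : cont3 f -> cont3 g -> cont3 (fun x y t => f x y t * g x y t).
Proof.
  intros Hf Hg.
  apply (cont3_comp (fun a b _ => a * b) f g (fun _ _ _ => 0)); auto using cont3_const.
  apply cont3_of_2d. intros; apply continuity_2d_pt_mult;
    [apply continuity_2d_pt_id1|apply continuity_2d_pt_id2].
Qed.
Lemma cont3_abs f : cont3 f -> cont3 (fun x y t => Rabs (f x y t)).
Proof.
  intros Hf.
  apply (cont3_comp (fun a _ _ => Rabs a) f (fun _ _ _ => 0) (fun _ _ _ => 0)); auto using cont3_const.
  intros x y t eps He. exists eps; split; auto. intros.
  eapply Rle_lt_trans; [apply Rabs_triang_inv2|]. auto.
Qed.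

Ltac ctac := lazymatch goal with
| |- cont3 (fun x y t => _ + _) => apply cont3_plus; [ctac|ctac]
| |- cont3 (fun x y t => _ - _) => apply cont3_minus; [ctac|ctac]
| |- cont3 (fun x y t => _ * _) => apply cont3_mult; [ctac|ctac]
| |- cont3 (fun x y t => Rabs _) => apply cont3_abs; ctac
| |- cont3 (fun x y t => x) => apply cont3_p1
| |- cont3 (fun x y t => y) => apply cont3_p2
| |- cont3 (fun x y t => t) => apply cont3_p3
| |- cont3 ?f => first [ apply cont3_const
                       | match goal with H : cont3 f |- _ => exact H end
                       | match goal with H : ?P _ |- _ => lazymatch P with cont3 => fail | _ => exact H end end ]
end.

Lemma cont3_slice3 h c : cont3 h -> cont3 (fun x y _ => h x y c).
Proof. intros H. apply (cont3_comp h (fun x _ _ => x) (fun _ y _ => y) (fun _ _ _ => c)); ctac. Qed.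

Lemma cont3_perm_132 h : cont3 h -> cont3 (fun x y t => h x t y).
Proof. intros H. apply (cont3_comp h (fun x _ _ => x) (fun _ _ t => t) (fun _ y _ => y)); ctac. Qed.
Lemma cont3_perm_312 h : cont3 h -> cont3 (fun x y t => h y t x).
Proof. intros H. apply (cont3_comp h (fun _ y _ => y) (fun _ _ t => t) (fun x _ _ => x)); ctac. Qed.
Lemma cont3_perm_213 h : cont3 h -> cont3 (fun x y t => h y x t).
Proof. intros H. apply (cont3_comp h (fun _ y _ => y) (fun x _ _ => x) (fun _ _ t => t)); ctac. Qed.
Lemma cont3_perm_231 h : cont3 h -> cont3 (fun x y t => h t x y).
Proof. intros H. apply (cont3_comp h (fun _ _ t => t) (fun x _ _ => x) (fun _ y _ => y)); ctac. Qed.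
Lemma cont3_perm_321 h : cont3 h -> cont3 (fun x y t => h t y x).
Proof. intros H. apply (cont3_comp h (fun _ _ t => t) (fun _ y _ => y) (fun x _ _ => x)); ctac. Qed.

Lemma cont3_c3 K p q z : cont3 K -> continuous (fun y => K p q y) z.
Proof.
  intros H. apply filterlim_locally. intros eps.
  destruct (H p q z eps (cond_pos eps)) as [d [Hd Hd']].
  exists (mkposreal d Hd). intros y Hy. apply Hd'; simpl; auto;
    rewrite Rminus_eq_0, Rabs_R0; auto.
Qed.

Lemma cont3_2d12 K c a b : cont3 K -> continuity_2d_pt (fun x y => K x y c) a b.
Proof.
  intros H eps. destruct (H a b c eps (cond_pos eps)) as [d [Hd Hd']].
  exists (mkposreal d Hd). intros u v Hu Hv. apply Hd'; auto.
  rewrite Rminus_eq_0, Rabs_R0; auto.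
Qed.

Lemma cont3_exRInt K p q a b : cont3 K -> ex_RInt (fun y => K p q y) a b.
Proof. intros H. apply (@ex_RInt_continuous R_CompleteNormedModule). intros; apply cont3_c3; auto. Qed.

Lemma D_scal_eta (c x : R) : is_derive (Rmult c) x c.
Proof.
  eapply D_val. apply (D_mult (fun _ => c) (fun s => s)); [apply D_const|apply D_id]. ring.
Qed.

Ltac dtac leaf := lazymatch goal with
| |- is_derive (fun s => _ - _) _ _ => apply D_minus; [dtac leaf | dtac leaf]
| |- is_derive (fun s => _ + _) _ _ => apply D_plus; [dtac leaf | dtac leaf]
| |- is_derive (fun s => _ * _) _ _ => apply D_mult; [dtac leaf | dtac leaf]
| |- is_derive (Rmult _) _ _ => apply D_scal_eta
| |- is_derive (fun s => s) _ _ => apply D_id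
| |- is_derive (fun s => ?F s ?a ?b) _ _ => leaf
| |- is_derive (fun s => ?F ?a s ?b) _ _ => leaf
| |- is_derive (fun s => ?F ?a ?b s) _ _ => leaf
| |- is_derive (fun s => ?c) _ _ => apply D_const
| _ => leaf
end.

Lemma eqR (a b : R) : a = b -> a = b.
Proof. auto. Qed.

Lemma param_cont_le K a b p q : a <= b -> cont3 K ->
  continuity_2d_pt (fun p q => RInt (K p q) a b) p q.
Proof.
  intros Hab HK eps.
  set (e' := eps / (4 * (b - a + 1))).
  assert (He' : 0 < e'). { unfold e'. apply Rdiv_lt_0_compat. apply cond_pos. lra. }
  assert (Hz : forall z, {d : posreal | forall p' q' y', Rabs (p' - p) < d ->
     Rabs (q' - q) < d -> Rabs (y' - z) < d -> Rabs (K p' q' y' - K p q z) < e'}).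
  { intro z. apply constructive_indefinite_description.
    destruct (HK p q z e' He') as [d [Hd H]]. exists (mkposreal d Hd). exact H. }
  set (delta := fun z => mkposreal (proj1_sig (Hz z) / 2) (is_pos_div_2 (proj1_sig (Hz z)))).
  destruct (compactness_value_1d a b delta) as [d Hd].
  exists d. intros p' q' Hp Hq.
  assert (Hpt : forall y, a <= y <= b -> Rabs (K p' q' y - K p q y) <= 2 * e').
  { intros y Hy. apply Rnot_lt_le. intro Hc. apply (Hd y Hy). intros [z [Hz1 [Hz2 Hz3]]].
    unfold delta in Hz2, Hz3; simpl in Hz2, Hz3.
    destruct (Hz z) as [dz Hdz]; simpl in Hz2, Hz3.
    pose proof (cond_pos dz).
    assert (h1 := Hdz p' q' y ltac:(lra) ltac:(lra) ltac:(lra)).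
    assert (h2 := Hdz p q y ltac:(rewrite Rminus_eq_0, Rabs_R0; lra)
                   ltac:(rewrite Rminus_eq_0, Rabs_R0; lra) ltac:(lra)).
    revert Hc h1 h2. unfold Rabs.
    repeat destruct (Rcase_abs _); lra. }
  assert (E : RInt (fun y => K p' q' y - K p q y) a b = RInt (K p' q') a b - RInt (K p q) a b).
  { apply (RInt_minus (V := R_CompleteNormedModule)); apply cont3_exRInt; auto. }
  change (Rabs (RInt (K p' q') a b - RInt (K p q) a b) < eps).
  rewrite <- E.
  eapply Rle_lt_trans.
  { apply abs_RInt_le_const; [exact Hab| |exact Hpt].
    apply (ex_RInt_minus (V := R_NormedModule)); apply cont3_exRInt; auto. }
  unfold e'. pose proof (cond_pos eps).
  apply Rmult_lt_reg_r with (4 * (b - a + 1)); [lra|].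
  field_simplify; [|lra]. nra.
Qed.

Lemma param_cont K a b p q : cont3 K ->
  continuity_2d_pt (fun p q => RInt (K p q) a b) p q.
Proof.
  intros HK. destruct (Rle_or_lt a b) as [H|H].
  - apply param_cont_le; auto.
  - apply continuity_2d_pt_ext with (f := fun p q => - RInt (K p q) b a).
    + intros. symmetry. rewrite <- (opp_RInt_swap (V := R_CompleteNormedModule)).
      * reflexivity.
      * apply cont3_exRInt; auto.
    + apply continuity_2d_pt_opp. apply param_cont_le; auto; lra.
Qed.

Lemma c2d_cont1 f x y : continuity_2d_pt f x y -> continuous (fun u => f u y) x.
Proof.
  intros H. apply filterlim_locally. intros eps. destruct (H eps) as [d Hd].
  exists d. intros u Hu. apply Hd; auto. rewrite Rminus_eq_0, Rabs_R0; apply cond_pos.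
Qed.
Lemma c2d_cont2 f x y : continuity_2d_pt f x y -> continuous (fun v => f x v) y.
Proof.
  intros H. apply filterlim_locally. intros eps. destruct (H eps) as [d Hd].
  exists d. intros u Hu. apply Hd; auto. rewrite Rminus_eq_0, Rabs_R0; apply cond_pos.
Qed.

Definition C2 (F : R -> R -> R) := cont3 (fun x y _ => F x y).

Lemma C2_c1 F x y : C2 F -> continuous (fun u => F u y) x.
Proof.
  intros H. apply c2d_cont1. apply (cont3_2d12 (fun x y _ => F x y) 0 x y); auto.
Qed.
Lemma C2_c2 F x y : C2 F -> continuous (fun v => F x v) y.
Proof.
  intros H. apply c2d_cont2. apply (cont3_2d12 (fun x y _ => F x y) 0 x y); auto.
Qed.
Lemma C2_2d F x y : C2 F -> continuity_2d_pt F x y.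
Proof. intros H. apply (cont3_2d12 (fun x y _ => F x y) 0 x y); auto. Qed.
Lemma C2_ex2 F x a b : C2 F -> ex_RInt (fun y => F x y) a b.
Proof. intros H. apply (@ex_RInt_continuous R_CompleteNormedModule). intros; apply C2_c2; auto. Qed.
Lemma C2_ex1 F y a b : C2 F -> ex_RInt (fun x => F x y) a b.
Proof. intros H. apply (@ex_RInt_continuous R_CompleteNormedModule). intros; apply C2_c1; auto. Qed.
Lemma C2_cont_inner F c d x : C2 F -> continuous (fun x => RInt (fun y => F x y) c d) x.
Proof.
  intros H. apply (c2d_cont1 (fun p q => RInt (fun y => F p y) c d) x 0).
  apply (param_cont (fun p q y => F p y)).
  apply (cont3_comp (fun x y _ => F x y) (fun x _ _ => x) (fun _ _ t => t) (fun _ _ _ => 0)); ctac.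
Qed.
Lemma C2_ex_outer F c d a b : C2 F -> ex_RInt (fun x => RInt (fun y => F x y) c d) a b.
Proof. intros H. apply (@ex_RInt_continuous R_CompleteNormedModule). intros; apply C2_cont_inner; auto. Qed.
Lemma C2_cont_inner' F a b y : C2 F -> continuous (fun y => RInt (fun x => F x y) a b) y.
Proof.
  intros H. apply (c2d_cont1 (fun p q => RInt (fun x => F x p) a b) y 0).
  apply (param_cont (fun p q x => F x p)).
  apply (cont3_comp (fun x y _ => F x y) (fun _ _ t => t) (fun x _ _ => x) (fun _ _ _ => 0)); ctac.
Qed.

Lemma fubini F a b c d : a < b -> C2 F ->
  RInt (fun x => RInt (fun y => F x y) c d) a b =
  RInt (fun y => RInt (fun x => F x y) a b) c d.
Proof.
  intros Hab HF.
  set (phi := fun x => RInt (fun y => F x y) c d).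
  set (G := fun s y => RInt (fun x => F x y) a s).
  set (F1 := fun s => RInt phi a s).
  set (F2 := fun s => RInt (fun y => G s y) c d).
  assert (HG : forall s y, is_derive (fun z => G z y) s (F s y)).
  { intros s y. unfold G.
    apply (is_derive_RInt (V := R_NormedModule) (fun x => F x y) _ a).
    - exists (mkposreal 1 Rlt_0_1). intros s' _. apply (RInt_correct (V := R_CompleteNormedModule)).
      apply C2_ex1; auto.
    - apply C2_c1; auto. }
  assert (D1 : forall s, is_derive F1 s (phi s)).
  { intros s. unfold F1.
    apply (is_derive_RInt (V := R_NormedModule) phi _ a).
    - exists (mkposreal 1 Rlt_0_1). intros s' _. apply (RInt_correct (V := R_CompleteNormedModule)).
      apply C2_ex_outer; auto.
    - apply C2_cont_inner; auto. }
  assert (D2 : forall s, is_derive F2 s (phi s)).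
  { intros s. unfold F2.
    eapply D_val.
    - apply (is_derive_RInt_param G c d s).
      + exists (mkposreal 1 Rlt_0_1). intros s' _ t _. eexists. apply HG.
      + intros t _. apply continuity_2d_pt_ext with (f := F).
        * intros u v. symmetry. apply is_derive_unique. apply HG.
        * apply C2_2d; auto.
      + exists (mkposreal 1 Rlt_0_1). intros s' _. unfold G.
        apply (@ex_RInt_continuous R_CompleteNormedModule). intros; apply C2_cont_inner'; auto.
    - apply RInt_ext. intros y _. apply is_derive_unique. apply HG. }
  assert (Heq : F1 a - F2 a = F1 b - F2 b).
  { apply (eq_is_derive (V := R_NormedModule) (fun s => F1 s - F2 s)); auto.
    intros t _. eapply D_val. apply D_minus; [apply D1|apply D2]. apply Rminus_diag_eq; reflexivity. }
  assert (Ha1 : F1 a = 0). { unfold F1. apply (RInt_point (V := R_CompleteNormedModule)). }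
  assert (Ha2 : F2 a = 0).
  { unfold F2, G. rewrite (RInt_ext _ (fun _ => 0)).
    - rewrite (RInt_const (V := R_CompleteNormedModule)). simpl. apply Rmult_0_r.
    - intros. apply (RInt_point (V := R_CompleteNormedModule)). }
  rewrite Ha1, Ha2 in Heq. unfold F1, F2, G, phi in *. lra.
Qed.

Definition D2 (L B : R) (F : R -> R -> R) : R :=
  RInt (fun x => RInt (fun y => F x y) (- B) B) 0 L.

Lemma RInt_lin (f g : R -> R) lo hi a b : ex_RInt f lo hi -> ex_RInt g lo hi ->
  RInt (fun t => a * f t + b * g t) lo hi = a * RInt f lo hi + b * RInt g lo hi.
Proof.
  intros Hf Hg.
  rewrite (RInt_plus (V := R_CompleteNormedModule) (fun t => a * f t) (fun t => b * g t)).
  - rewrite (RInt_scal (V := R_CompleteNormedModule) f), (RInt_scal (V := R_CompleteNormedModule) g); auto.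
  - apply (ex_RInt_scal (V := R_NormedModule) f); auto.
  - apply (ex_RInt_scal (V := R_NormedModule) g); auto.
Qed.

Lemma IntOmega_D2 L B F : C2 F -> IntOmega L B F = D2 L B F.
Proof.
  intros HF. unfold IntOmega, D2.
  assert (E : forall x, Integ (fun y => F x y) (- B) B = RInt (fun y => F x y) (- B) B).
  { intros x. apply Integ_RInt. apply C2_ex2; auto. }
  rewrite Integ_RInt.
  - apply RInt_ext. intros; apply E.
  - eapply ex_RInt_ext. { intros x _. symmetry. apply E. } apply C2_ex_outer; auto.
Qed.

Lemma D2_ext L B F G : 0 < L -> 0 < B ->
  (forall x y, 0 < x < L -> - B < y < B -> F x y = G x y) -> D2 L B F = D2 L B G.
Proof.
  intros HL HB H. unfold D2. apply RInt_ext. intros x Hx.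
  rewrite Rmin_left in Hx by lra. rewrite Rmax_right in Hx by lra.
  apply RInt_ext. intros y Hy.
  rewrite Rmin_left in Hy by lra. rewrite Rmax_right in Hy by lra.
  apply H; auto.
Qed.

Lemma D2_lin L B F G a b : C2 F -> C2 G ->
  D2 L B (fun x y => a * F x y + b * G x y) = a * D2 L B F + b * D2 L B G.
Proof.
  intros HF HG. unfold D2.
  rewrite <- RInt_lin; try (apply C2_ex_outer; auto).
  apply RInt_ext. intros x _. apply RInt_lin; apply C2_ex2; auto.
Qed.

Lemma D2_le L B F G : 0 < L -> 0 < B -> C2 F -> C2 G ->
  (forall x y, 0 < x < L -> - B < y < B -> F x y <= G x y) -> D2 L B F <= D2 L B G.
Proof.
  intros HL HB HF HG H. unfold D2. apply RInt_le; try lra; try (apply C2_ex_outer; auto).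
  intros x Hx. apply RInt_le; try lra; try (apply C2_ex2; auto).
  intros; apply H; auto.
Qed.

Lemma D2_const0 L B : D2 L B (fun _ _ => 0) = 0.
Proof.
  unfold D2. rewrite (RInt_ext _ (fun _ => 0)).
  - rewrite (RInt_const (V := R_CompleteNormedModule)). simpl. apply Rmult_0_r.
  - intros. rewrite (RInt_const (V := R_CompleteNormedModule)). simpl. apply Rmult_0_r.
Qed.

Lemma C2_const c : C2 (fun _ _ => c).
Proof. unfold C2; ctac. Qed.

Lemma D2_ge0 L B F : 0 < L -> 0 < B -> C2 F ->
  (forall x y, 0 < x < L -> - B < y < B -> 0 <= F x y) -> 0 <= D2 L B F.
Proof.
  intros. rewrite <- (D2_const0 L B). apply D2_le; auto. apply C2_const.
Qed.

Lemma C2_slice h t : cont3 h -> C2 (fun x y => h x y t).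
Proof. intros H. unfold C2. apply cont3_slice3; auto. Qed.

Lemma inner_deriv B h ht x t : cont3 h -> cont3 ht -> dt_is h ht ->
  is_derive (fun u => RInt (fun y => h x y u) (- B) B) t (RInt (fun y => ht x y t) (- B) B).
Proof.
  intros Hh Hht Hd.
  assert (HD : forall u y, is_derive (fun z => h x y z) u (ht x y u)).
  { intros u y. apply is_derive_Reals. apply Hd. }
  eapply D_val.
  - apply (is_derive_RInt_param (fun u y => h x y u) (- B) B t).
    + exists (mkposreal 1 Rlt_0_1). intros s' _ y _. eexists. apply HD.
    + intros y _. apply continuity_2d_pt_ext with (f := fun u v => ht x v u).
      * intros u v. symmetry. apply is_derive_unique. apply HD.
      * apply (cont3_2d12 (fun u v _ => ht x v u) 0).
        apply (cont3_comp ht (fun _ _ _ => x) (fun _ y _ => y) (fun x _ _ => x)); ctac.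
    + exists (mkposreal 1 Rlt_0_1). intros s' _.
      apply (cont3_exRInt (fun a b y => h x y s') 0 0).
      apply (cont3_comp h (fun _ _ _ => x) (fun _ _ t => t) (fun _ _ _ => s')); ctac.
  - apply RInt_ext. intros y _. apply is_derive_unique. apply HD.
Qed.

Lemma dD2 L B h ht t0 : cont3 h -> cont3 ht -> dt_is h ht ->
  is_derive (fun t => D2 L B (fun x y => h x y t)) t0 (D2 L B (fun x y => ht x y t0)).
Proof.
  intros Hh Hht Hd. unfold D2.
  set (I := fun t x => RInt (fun y => h x y t) (- B) B).
  set (J := fun t x => RInt (fun y => ht x y t) (- B) B).
  assert (HI : forall t x, is_derive (fun u => I u x) t (J t x)).
  { intros t x. apply inner_deriv; auto. }
  eapply D_val.
  - apply (is_derive_RInt_param I 0 L t0).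
    + exists (mkposreal 1 Rlt_0_1). intros s' _ x _. eexists. apply HI.
    + intros x _. apply continuity_2d_pt_ext with (f := J).
      * intros u v. symmetry. apply is_derive_unique. apply HI.
      * unfold J. apply (param_cont (fun p q y => ht q y p)).
        apply (cont3_comp ht (fun _ y _ => y) (fun _ _ t => t) (fun x _ _ => x)); ctac.
    + exists (mkposreal 1 Rlt_0_1). intros s' _. unfold I.
      apply (C2_ex_outer (fun x y => h x y s')). apply C2_slice; auto.
  - apply RInt_ext. intros x _. apply is_derive_unique. apply HI.
Qed.

Lemma cont_mult (f g : R -> R) x : continuous f x -> continuous g x -> continuous (fun y => f y * g y) x.
Proof. intros; apply (continuous_mult f g); auto. Qed.
Lemma cont_plus (f g : R -> R) x : continuous f x -> continuous g x -> continuous (fun y => f y + g y) x.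
Proof. intros; apply (continuous_plus (V := R_NormedModule) f g); auto. Qed.
Lemma cont_opp (f : R -> R) x : continuous f x -> continuous (fun y => - f y) x.
Proof. intros; apply (continuous_opp (V := R_NormedModule) f); auto. Qed.
Lemma cont_const (c x : R) : continuous (fun _ : R => c) x.
Proof. apply (continuous_const (U := R_UniformSpace) (V := R_UniformSpace)). Qed.

Lemma wirt1 (f f' : R -> R) a b k : a < b -> 0 < k -> k * (b - a) < PI ->
  (forall x, is_derive f x (f' x)) -> (forall x, continuous f' x) -> f a = 0 -> f b = 0 ->
  k * k * RInt (fun x => f x * f x) a b <= RInt (fun x => f' x * f' x) a b.
Proof.
  intros Hab Hk HkPI Hf Hf' Ha Hb.
  set (c := (PI - k * (b - a)) / 2).
  set (th := fun x => k * (x - a) + c).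
  set (w := fun x => k * cos (th x) / sin (th x)).
  assert (Hsin : forall x, a <= x <= b -> 0 < sin (th x)).
  { intros x Hx. apply sin_gt_0; unfold th, c; nra. }
  assert (Hw : forall x, a <= x <= b -> is_derive w x (- (k * k + w x * w x))).
  { intros x Hx. pose proof (Hsin x Hx) as Hs. unfold w, th in *. auto_derive.
    - unfold Rminus in *. lra.
    - unfold Rminus in *. field. lra. }
  set (H := fun x => w x * (f x * f x)).
  set (H' := fun x => - (k * k + w x * w x) * (f x * f x) + w x * (f' x * f x + f x * f' x)).
  assert (HH : forall x, a <= x <= b -> is_derive H x (H' x)).
  { intros x Hx. unfold H. eapply D_val.
    - apply D_mult; [apply Hw; auto|apply D_mult; apply Hf].
    - unfold H'. ring. }
  assert (Hfc : forall x, continuous f x).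
  { intros x. apply (ex_derive_continuous (K := R_AbsRing) (V := R_NormedModule)). eexists; apply Hf. }
  assert (HH'c : forall x, a <= x <= b -> continuous H' x).
  { intros x Hx. unfold H'.
    assert (Hwc : continuous w x). { apply (ex_derive_continuous (K := R_AbsRing) (V := R_NormedModule)). eexists; apply Hw; auto. }
    apply cont_plus; apply cont_mult.
    - apply cont_opp. apply cont_plus. apply cont_const. apply cont_mult; auto.
    - apply cont_mult; auto.
    - auto.
    - apply cont_plus; apply cont_mult; auto. }
  assert (HI : RInt H' a b = 0).
  { apply is_RInt_unique.
    eapply (is_RInt_ext H'); [intros; reflexivity|].
    replace 0 with (minus (H b) (H a)).
    - apply (is_RInt_derive (V := R_CompleteNormedModule) H H').
      + intros x Hx. rewrite Rmin_left, Rmax_right in Hx by lra. apply HH; auto.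
      + intros x Hx. rewrite Rmin_left, Rmax_right in Hx by lra. apply HH'c; auto.
    - unfold H. rewrite Ha, Hb. unfold minus, plus, opp; simpl. ring. }
  assert (Hexf2 : ex_RInt (fun x => f x * f x) a b).
  { apply (@ex_RInt_continuous R_CompleteNormedModule). intros; apply cont_mult; auto. }
  assert (Hexf'2 : ex_RInt (fun x => f' x * f' x) a b).
  { apply (@ex_RInt_continuous R_CompleteNormedModule). intros; apply cont_mult; auto. }
  assert (Hle : RInt H' a b <= RInt (fun x => 1 * (f' x * f' x) + (- (k * k)) * (f x * f x)) a b).
  { apply RInt_le; [lra| | |].
    - apply (@ex_RInt_continuous R_CompleteNormedModule). intros x Hx.
      rewrite Rmin_left, Rmax_right in Hx by lra. apply HH'c; auto.
    - apply (ex_RInt_plus (V := R_NormedModule) (fun x => 1 * (f' x * f' x)) (fun x => (- (k * k)) * (f x * f x))).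
      + apply (ex_RInt_scal (V := R_NormedModule) (fun x => f' x * f' x)); auto.
      + apply (ex_RInt_scal (V := R_NormedModule) (fun x => f x * f x)); auto.
    - intros x Hx. unfold H'. pose proof (Rle_0_sqr (f' x - w x * f x)) as Hq; unfold Rsqr in Hq; nra. }
  rewrite RInt_lin in Hle; auto. lra.
Qed.

Lemma lim_sq K N X : 0 < K -> 0 <= N -> (forall k, 0 < k -> k < K -> k * k * N <= X) ->
  K * K * N <= X.
Proof.
  intros HK HN H. destruct (Rle_or_lt (K * K * N) X) as [h|h]; auto. exfalso.
  assert (HX0 : 0 <= X). { pose proof (H (K/2) ltac:(lra) ltac:(lra)). nra. }
  assert (HN0 : 0 < N). { destruct (Rle_lt_or_eq_dec 0 N HN); auto. subst. nra. }
  set (s := (K * K * N - X) / (4 * (K * K * N))).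
  assert (HKN : 0 < K * K * N) by (apply Rmult_lt_0_compat; nra).
  assert (Hs0 : 0 < s). { unfold s. apply Rdiv_lt_0_compat; lra. }
  assert (Hs1 : s <= 1/4).
  { unfold s. apply Rmult_le_reg_r with (4 * (K * K * N)); [lra|].
    field_simplify; lra. }
  assert (Hsd : s * (4 * (K * K * N)) = K * K * N - X).
  { unfold s. field. lra. }
  pose proof (H (K * (1 - s)) ltac:(nra) ltac:(nra)) as Hk.
  nra.
Qed.



Lemma RInt_scal' (f : R -> R) a b c : ex_RInt f a b -> RInt (fun x => c * f x) a b = c * RInt f a b.
Proof. intros H. apply (RInt_scal (V := R_CompleteNormedModule) f); auto. Qed.

Lemma D2_scal L B F c : C2 F -> D2 L B (fun x y => c * F x y) = c * D2 L B F.
Proof.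
  intros HF. unfold D2. rewrite <- RInt_scal'; [|apply C2_ex_outer; auto].
  apply RInt_ext. intros. apply RInt_scal'. apply C2_ex2; auto.
Qed.

Section Slice.
Variables (L B : R) (F Fx Fy : R -> R -> R).
Hypothesis HL : 0 < L.
Hypothesis HB : 0 < B.
Hypothesis HF : C2 F.
Hypothesis HFx : C2 Fx.
Hypothesis HFy : C2 Fy.
Hypothesis HdX : forall x y, is_derive (fun s => F s y) x (Fx x y).
Hypothesis HdY : forall x y, is_derive (fun s => F x s) y (Fy x y).
Hypothesis Hbx : forall y, - B <= y <= B -> F 0 y = 0 /\ F L y = 0.
Hypothesis Hby : forall x, 0 <= x <= L -> F x B = 0 /\ F x (- B) = 0.

Lemma C2sq G : C2 G -> C2 (fun x y => G x y * G x y).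
Proof. unfold C2; intros; ctac. Qed.

Lemma poinc_x : (PI / L) * (PI / L) * D2 L B (fun x y => F x y * F x y)
   <= D2 L B (fun x y => Fx x y * Fx x y).
Proof.
  apply lim_sq.
  - apply Rdiv_lt_0_compat; auto. apply PI_RGT_0.
  - apply D2_ge0; auto. apply C2sq; auto. intros; nra.
  - intros k Hk HkK. unfold D2.
    rewrite !(fubini _ 0 L (- B) B) by (auto; apply C2sq; auto).
    rewrite <- RInt_scal'.
    2:{ apply (@ex_RInt_continuous R_CompleteNormedModule). intros.
        apply (C2_cont_inner' (fun x y => F x y * F x y)). apply C2sq; auto. }
    apply RInt_le; [lra| | |].
    + apply (ex_RInt_scal (V := R_NormedModule) (fun y => RInt (fun x => F x y * F x y) 0 L)).
      apply (@ex_RInt_continuous R_CompleteNormedModule). intros.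
      apply (C2_cont_inner' (fun x y => F x y * F x y)). apply C2sq; auto.
    + apply (@ex_RInt_continuous R_CompleteNormedModule). intros.
      apply (C2_cont_inner' (fun x y => Fx x y * Fx x y)). apply C2sq; auto.
    + intros y Hy. apply (wirt1 (fun s => F s y) (fun s => Fx s y)); auto.
      * assert (k * L < PI / L * L) by (apply Rmult_lt_compat_r; auto).
        replace (PI / L * L) with PI in H by (field; lra). lra.
      * intros; apply C2_c1; auto.
      * apply Hbx; lra.
      * apply Hbx; lra.
Qed.

Lemma poinc_y : (PI / (2 * B)) * (PI / (2 * B)) * D2 L B (fun x y => F x y * F x y)
   <= D2 L B (fun x y => Fy x y * Fy x y).
Proof.
  apply lim_sq.
  - apply Rdiv_lt_0_compat; [apply PI_RGT_0|lra].
  - apply D2_ge0; auto. apply C2sq; auto. intros; nra.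
  - intros k Hk HkK. rewrite <- D2_scal by (apply C2sq; auto). unfold D2.
    apply RInt_le; [lra| | |].
    + apply (C2_ex_outer (fun x y => k * k * (F x y * F x y))). unfold C2; ctac.
    + apply (C2_ex_outer (fun x y => Fy x y * Fy x y)). apply C2sq; auto.
    + intros x Hx. rewrite RInt_scal' by (apply (C2_ex2 (fun x y => F x y * F x y)); apply C2sq; auto).
      apply (wirt1 (fun s => F x s) (fun s => Fy x s)); auto.
      * lra.
      * assert (k * (2 * B) < PI / (2 * B) * (2 * B)) by (apply Rmult_lt_compat_r; lra).
        replace (PI / (2 * B) * (2 * B)) with PI in H by (field; lra).
        replace (B - - B) with (2 * B) by ring. lra.
      * intros; apply C2_c2; auto.
      * apply Hby; lra.
      * apply Hby; lra.
Qed.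

End Slice.

Lemma sq_le1 (f f' : R -> R) lo hi x : lo <= x <= hi ->
  (forall s, is_derive f s (f' s)) -> (forall s, continuous f' s) -> f lo = 0 -> f hi = 0 ->
  2 * (f x * f x) <= 2 * RInt (fun s => Rabs (f s * f' s)) lo hi.
Proof.
  intros Hx Hd Hc Hlo Hhi.
  set (D := fun s => f' s * f s + f s * f' s).
  assert (Hfc : forall s, continuous f s).
  { intros s. apply (ex_derive_continuous (K := R_AbsRing) (V := R_NormedModule)). eexists; apply Hd. }
  assert (HD : forall s, is_derive (fun s => f s * f s) s (D s)).
  { intros s. unfold D. eapply D_val. apply D_mult; apply Hd. reflexivity. }
  assert (HDc : forall s, continuous D s).
  { intros s. unfold D. apply cont_plus; apply cont_mult; auto. }
  assert (HaDc : forall s, continuous (fun s => Rabs (D s)) s).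
  { intros s. apply continuous_Rabs_comp. auto. }
  assert (I1 : RInt D lo x = f x * f x - f lo * f lo).
  { apply is_RInt_unique. apply (is_RInt_derive (V := R_CompleteNormedModule) (fun s => f s * f s) D); auto. }
  assert (I2 : RInt D x hi = f hi * f hi - f x * f x).
  { apply is_RInt_unique. apply (is_RInt_derive (V := R_CompleteNormedModule) (fun s => f s * f s) D); auto. }
  rewrite Hlo in I1. rewrite Hhi in I2.
  assert (exD : forall u v, ex_RInt D u v).
  { intros. apply (@ex_RInt_continuous R_CompleteNormedModule). intros; auto. }
  assert (exaD : forall u v, ex_RInt (fun s => Rabs (D s)) u v).
  { intros. apply (@ex_RInt_continuous R_CompleteNormedModule). intros; auto. }
  pose proof (abs_RInt_le D lo x ltac:(lra) (exD _ _)) as A1.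
  pose proof (abs_RInt_le D x hi ltac:(lra) (exD _ _)) as A2.
  pose proof (RInt_Chasles (V := R_CompleteNormedModule) (fun s => Rabs (D s)) lo x hi (exaD _ _) (exaD _ _)) as Ch.
  simpl in Ch. unfold plus in Ch; simpl in Ch.
  assert (E : RInt (fun s => Rabs (D s)) lo hi = 2 * RInt (fun s => Rabs (f s * f' s)) lo hi).
  { rewrite <- RInt_scal'.
    - apply RInt_ext. intros s _. unfold D.
      replace (f' s * f s + f s * f' s) with (2 * (f s * f' s)) by ring.
      rewrite Rabs_mult, Rabs_right; lra.
    - apply (@ex_RInt_continuous R_CompleteNormedModule). intros; apply continuous_Rabs_comp.
      apply cont_mult; auto. }
  rewrite <- E, <- Ch.
  rewrite I1 in A1. rewrite I2 in A2.
  pose proof (Rle_abs (f x * f x - 0 * 0)). pose proof (Rabs_Ropp (0 * 0 - f x * f x)).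
  replace (- (0 * 0 - f x * f x)) with (f x * f x - 0 * 0) in H0 by ring.
  pose proof (Rle_abs (0 * 0 - f x * f x)).
  lra.
Qed.

Lemma disc A X C : (forall l, 0 <= l * l * A + l * (-2) * X + C) -> 0 <= A -> X * X <= A * C.
Proof.
  intros H HA. pose proof (H 0) as H0.
  destruct (Rle_lt_or_eq_dec 0 A HA) as [Ap|Az].
  - pose proof (H (X / A)) as H1.
    replace (X / A * (X / A) * A + X / A * -2 * X + C) with (C - X * X / A) in H1 by (field; lra).
    assert (X * X / A <= C) by lra.
    apply Rmult_le_reg_r with (/ A). apply Rinv_0_lt_compat; auto.
    replace (A * C * / A) with C by (field; lra). exact H2.
  - subst A. destruct (Req_dec X 0) as [->|Xn]; [lra|].
    pose proof (H ((C + 1) / (2 * X))) as H1.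
    replace ((C + 1) / (2 * X) * ((C + 1) / (2 * X)) * 0 + (C + 1) / (2 * X) * -2 * X + C) with (-1) in H1
      by (field; auto). lra.
Qed.

Lemma cs2 L B P Q : 0 < L -> 0 < B -> C2 P -> C2 Q ->
  D2 L B (fun x y => Rabs (P x y * Q x y)) * D2 L B (fun x y => Rabs (P x y * Q x y))
  <= D2 L B (fun x y => P x y * P x y) * D2 L B (fun x y => Q x y * Q x y).
Proof.
  intros HL HB HP HQ. apply disc.
  - intros l.
    assert (HG : C2 (fun x y => (-2 * l) * Rabs (P x y * Q x y) + 1 * (Q x y * Q x y))) by (unfold C2 in *; ctac).
    assert (E : D2 L B (fun x y => (l * l) * (P x y * P x y) +
                   1 * ((-2 * l) * Rabs (P x y * Q x y) + 1 * (Q x y * Q x y)))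
             = l * l * D2 L B (fun x y => P x y * P x y) + l * -2 * D2 L B (fun x y => Rabs (P x y * Q x y))
               + D2 L B (fun x y => Q x y * Q x y)).
    { rewrite (D2_lin L B (fun x y => P x y * P x y)); [| unfold C2 in *; ctac | auto].
      rewrite (D2_lin L B (fun x y => Rabs (P x y * Q x y))); [ring| unfold C2 in *; ctac | unfold C2 in *; ctac]. }
    rewrite <- E. apply D2_ge0; auto.
    + unfold C2 in *; ctac.
    + intros x y _ _. rewrite Rabs_mult.
      pose proof (Rle_0_sqr (l * Rabs (P x y) - Rabs (Q x y))). unfold Rsqr in H.
      replace (P x y * P x y) with (Rabs (P x y) * Rabs (P x y)).
      2:{ rewrite <- Rabs_mult. apply Rabs_right. nra. }
      replace (Q x y * Q x y) with (Rabs (Q x y) * Rabs (Q x y)).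
      2:{ rewrite <- Rabs_mult. apply Rabs_right. nra. }
      nra.
  - apply D2_ge0; auto. unfold C2 in *; ctac. intros; nra.
Qed.

Lemma cont_C2x f : (forall x, continuous f x) -> C2 (fun x _ => f x).
Proof.
  intros H x y t eps He.
  destruct (proj1 (filterlim_locally f (f x)) (H x) (mkposreal eps He)) as [d Hd].
  exists d. split; [apply cond_pos|]. intros. apply Hd. exact H0.
Qed.
Lemma cont_C2y f : (forall y, continuous f y) -> C2 (fun _ y => f y).
Proof.
  intros H x y t eps He.
  destruct (proj1 (filterlim_locally f (f y)) (H y) (mkposreal eps He)) as [d Hd].
  exists d. split; [apply cond_pos|]. intros. apply Hd. exact H1.
Qed.

Section Slice2.
Variables (L B : R) (F Fx Fy : R -> R -> R).
Hypothesis HL : 0 < L.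
Hypothesis HB : 0 < B.
Hypothesis HF : C2 F.
Hypothesis HFx : C2 Fx.
Hypothesis HFy : C2 Fy.
Hypothesis HdX : forall x y, is_derive (fun s => F s y) x (Fx x y).
Hypothesis HdY : forall x y, is_derive (fun s => F x s) y (Fy x y).
Hypothesis Hbx : forall y, - B <= y <= B -> F 0 y = 0 /\ F L y = 0.
Hypothesis Hby : forall x, 0 <= x <= L -> F x B = 0 /\ F x (- B) = 0.

Lemma lady : D2 L B (fun x y => (F x y * F x y) * (F x y * F x y)) <=
  D2 L B (fun x y => F x y * F x y) *
  (D2 L B (fun x y => Fx x y * Fx x y) + D2 L B (fun x y => Fy x y * Fy x y)) / 2.
Proof.
  set (a := fun y => RInt (fun s => Rabs (F s y * Fx s y)) 0 L).
  set (b := fun x => RInt (fun s => Rabs (F x s * Fy x s)) (- B) B).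
  assert (Ha : forall x y, 0 <= x <= L -> - B <= y <= B -> F x y * F x y <= a y).
  { intros x y Hx Hy. apply Rmult_le_reg_l with 2; [lra|].
    apply (sq_le1 (fun s => F s y) (fun s => Fx s y)); auto.
    - intros; apply C2_c1; auto.
    - apply Hbx; auto.
    - apply Hbx; auto. }
  assert (Hb : forall x y, 0 <= x <= L -> - B <= y <= B -> F x y * F x y <= b x).
  { intros x y Hx Hy. apply Rmult_le_reg_l with 2; [lra|].
    apply (sq_le1 (fun s => F x s) (fun s => Fy x s)); auto.
    - intros; apply C2_c2; auto.
    - apply Hby; auto.
    - apply Hby; auto. }
  assert (Hac : forall y, continuous a y).
  { intros y. apply (C2_cont_inner' (fun s y => Rabs (F s y * Fx s y))). unfold C2 in *; ctac. }
  assert (Hbc : forall x, continuous b x).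
  { intros x. apply (C2_cont_inner (fun x s => Rabs (F x s * Fy x s))). unfold C2 in *; ctac. }
  assert (S1 : D2 L B (fun x y => (F x y * F x y) * (F x y * F x y)) <= D2 L B (fun x y => b x * a y)).
  { apply D2_le; auto.
    - unfold C2 in *; ctac.
    - unfold C2. apply cont3_mult; [apply (cont_C2x b)|apply (cont_C2y a)]; auto.
    - intros x y Hx Hy. pose proof (Ha x y ltac:(lra) ltac:(lra)). pose proof (Hb x y ltac:(lra) ltac:(lra)).
      apply Rmult_le_compat; nra. }
  assert (exa : ex_RInt a (- B) B). { apply (@ex_RInt_continuous R_CompleteNormedModule). intros; auto. }
  assert (exb : ex_RInt b 0 L). { apply (@ex_RInt_continuous R_CompleteNormedModule). intros; auto. }
  assert (S2 : D2 L B (fun x y => b x * a y) = RInt a (- B) B * RInt b 0 L).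
  { unfold D2. rewrite <- RInt_scal'; auto. apply RInt_ext. intros x _.
    rewrite RInt_scal'; auto. apply Rmult_comm. }
  assert (Xe : RInt a (- B) B = D2 L B (fun x y => Rabs (F x y * Fx x y))).
  { unfold D2, a. symmetry. apply fubini; auto. unfold C2 in *; ctac. }
  assert (Ye : RInt b 0 L = D2 L B (fun x y => Rabs (F x y * Fy x y))) by reflexivity.
  pose proof (cs2 L B F Fx HL HB HF HFx) as CX.
  pose proof (cs2 L B F Fy HL HB HF HFy) as CY.
  rewrite <- Xe in CX. rewrite <- Ye in CY.
  set (X := RInt a (- B) B) in *. set (Y := RInt b 0 L) in *.
  set (N := D2 L B (fun x y => F x y * F x y)) in *.
  set (Nx := D2 L B (fun x y => Fx x y * Fx x y)) in *.
  set (Ny := D2 L B (fun x y => Fy x y * Fy x y)) in *.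
  assert (X0 : 0 <= X). { rewrite Xe. apply D2_ge0; auto. unfold C2 in *; ctac. intros; apply Rabs_pos. }
  assert (Y0 : 0 <= Y). { rewrite Ye. apply D2_ge0; auto. unfold C2 in *; ctac. intros; apply Rabs_pos. }
  assert (N0 : 0 <= N). { apply D2_ge0; auto. unfold C2 in *; ctac. intros; nra. }
  assert (Nx0 : 0 <= Nx). { apply D2_ge0; auto. unfold C2 in *; ctac. intros; nra. }
  assert (Ny0 : 0 <= Ny). { apply D2_ge0; auto. unfold C2 in *; ctac. intros; nra. }
  rewrite S2 in S1.
  assert (XY : X * Y <= N * (Nx + Ny) / 2).
  { destruct (Rle_or_lt (X * Y) (N * (Nx + Ny) / 2)) as [h|h]; auto.
    assert (h2 : (X * X) * (Y * Y) <= (N * Nx) * (N * Ny)) by (apply Rmult_le_compat; nra).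
    assert (h3 : (N * Nx) * (N * Ny) <= (N * (Nx + Ny) / 2) * (N * (Nx + Ny) / 2)).
    { pose proof (Rle_0_sqr (Nx - Ny)). unfold Rsqr in H. nra. }
    assert (h4 : (N * (Nx + Ny) / 2) * (N * (Nx + Ny) / 2) < (X * Y) * (X * Y)).
    { apply Rmult_le_0_lt_compat; nra. }
    nra. }
  lra.
Qed.
End Slice2.

Lemma RInt0 a b : RInt (fun _ : R => 0) a b = 0.
Proof. rewrite (RInt_const (V := R_CompleteNormedModule)). simpl. apply Rmult_0_r. Qed.

Lemma deriv_zero_loc (f : R -> R) lo hi y l : (forall s, lo <= s <= hi -> f s = 0) -> lo < y < hi ->
  is_derive f y l -> l = 0.
Proof.
  intros Hz Hy Hd.
  assert (Hl : locally y (fun s => f s = 0)).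
  { assert (He : 0 < Rmin (y - lo) (hi - y)) by (apply Rmin_pos; lra).
    exists (mkposreal _ He). intros s Hs. apply Hz.
    change (Rabs (s - y) < Rmin (y - lo) (hi - y)) in Hs.
    pose proof (Rmin_l (y - lo) (hi - y)). pose proof (Rmin_r (y - lo) (hi - y)).
    revert Hs. unfold Rabs. destruct (Rcase_abs _); lra. }
  assert (H2 : is_derive (fun _ : R => 0) y l).
  { apply (is_derive_ext_loc f). exact Hl. exact Hd. }
  apply is_derive_unique in H2. rewrite Derive_const in H2. auto.
Qed.

Definition Pf (u ux uxx uy : R -> R -> R -> R) (al be : R) (x y t : R) : R :=
  (al + be * x) * (u x y t * u x y t) * (1/2)
  + (al + be * x) * ((u x y t * u x y t) * (u x y t * u x y t)) * (1/4)
  + (al + be * x) * (u x y t * uxx x y t)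
  - be * (u x y t * ux x y t)
  - (al + be * x) * (ux x y t * ux x y t) * (1/2)
  - (al + be * x) * (uy x y t * uy x y t) * (1/2).

Definition Rf (u ux uy : R -> R -> R -> R) (x y t : R) : R :=
  u x y t * u x y t * (1/2) + (u x y t * u x y t) * (u x y t * u x y t) * (1/4)
  - ux x y t * ux x y t * (3/2) - uy x y t * uy x y t * (1/2).

Definition Pxf (u ux uxx uxxx uy uxy : R -> R -> R -> R) (al be : R) (x y t : R) : R :=
  be * Rf u ux uy x y t
  + (al + be * x) * u x y t * (ux x y t + u x y t * u x y t * ux x y t + uxxx x y t)
  - (al + be * x) * uy x y t * uxy x y t.

Definition Qf (u uxy : R -> R -> R -> R) (al be : R) (x y t : R) : R :=
  (al + be * x) * (u x y t * uxy x y t).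

Definition Qyf (u uy uxy uxyy : R -> R -> R -> R) (al be : R) (x y t : R) : R :=
  (al + be * x) * (uy x y t * uxy x y t + u x y t * uxyy x y t).



Section Energy.
Variables (L B : R) (u ut ux uxx uxxx uy uyy uxy uxyy : R -> R -> R -> R).
Hypothesis HL : 0 < L.
Hypothesis HB : 0 < B.
Hypothesis Hdt : dt_is u ut.
Hypothesis Hdx1 : dx_is u ux.
Hypothesis Hdx2 : dx_is ux uxx.
Hypothesis Hdx3 : dx_is uxx uxxx.
Hypothesis Hdy1 : dy_is u uy.
Hypothesis Hdxy : dx_is uy uxy.
Hypothesis Hdyxy : dy_is uxy uxyy.
Hypothesis Cu : cont3 u.
Hypothesis Cut : cont3 ut.
Hypothesis Cux : cont3 ux.
Hypothesis Cuxx : cont3 uxx.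
Hypothesis Cuxxx : cont3 uxxx.
Hypothesis Cuy : cont3 uy.
Hypothesis Cuxy : cont3 uxy.
Hypothesis Cuxyy : cont3 uxyy.
Hypothesis Heq : forall x y t, 0 < x < L -> - B < y < B -> 0 < t ->
     ut x y t + ux x y t + (u x y t) ^ 2 * ux x y t + uxxx x y t + uxyy x y t = 0.
Hypothesis Hbc1 : forall x t, 0 <= x <= L -> 0 <= t -> u x B t = 0 /\ u x (- B) t = 0.
Hypothesis Hbc2 : forall y t, - B <= y <= B -> 0 <= t ->
     u 0 y t = 0 /\ u L y t = 0 /\ ux L y t = 0.

Lemma dPx al be x y t : is_derive (fun s => Pf u ux uxx uy al be s y t) x (Pxf u ux uxx uxxx uy uxy al be x y t).
Proof.
  assert (H1 : forall s, is_derive (fun z => u z y t) s (ux s y t)) by (intros; apply is_derive_Reals; apply Hdx1).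
  assert (H2 : forall s, is_derive (fun z => ux z y t) s (uxx s y t)) by (intros; apply is_derive_Reals; apply Hdx2).
  assert (H3 : forall s, is_derive (fun z => uxx z y t) s (uxxx s y t)) by (intros; apply is_derive_Reals; apply Hdx3).
  assert (H4 : forall s, is_derive (fun z => uy z y t) s (uxy s y t)) by (intros; apply is_derive_Reals; apply Hdxy).
  unfold Pf. eapply D_val.
  - dtac ltac:(idtac; lazymatch goal with
      | |- is_derive (fun s => u s _ _) _ _ => apply H1
      | |- is_derive (fun s => ux s _ _) _ _ => apply H2
      | |- is_derive (fun s => uxx s _ _) _ _ => apply H3
      | |- is_derive (fun s => uy s _ _) _ _ => apply H4 end).
  - cbv beta. unfold Pxf, Rf. apply eqR. field.
Qed.

Lemma dQy al be x y t : is_derive (fun s => Qf u uxy al be x s t) y (Qyf u uy uxy uxyy al be x y t).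
Proof.
  assert (H1 : forall s, is_derive (fun z => u x z t) s (uy x s t)) by (intros; apply is_derive_Reals; apply Hdy1).
  assert (H2 : forall s, is_derive (fun z => uxy x z t) s (uxyy x s t)) by (intros; apply is_derive_Reals; apply Hdyxy).
  unfold Qf. eapply D_val.
  - dtac ltac:(idtac; lazymatch goal with
      | |- is_derive (fun s => u _ s _) _ _ => apply H1
      | |- is_derive (fun s => uxy _ s _) _ _ => apply H2 end).
  - cbv beta. unfold Qyf. apply eqR. ring.
Qed.

Lemma cPx al be : cont3 (Pxf u ux uxx uxxx uy uxy al be).
Proof. unfold Pxf, Rf. ctac. Qed.
Lemma cQy al be : cont3 (Qyf u uy uxy uxyy al be).
Proof. unfold Qyf. ctac. Qed.
Lemma cR : cont3 (Rf u ux uy).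
Proof. unfold Rf. ctac. Qed.

Lemma D2Qy0 al be t : 0 <= t -> D2 L B (fun x y => Qyf u uy uxy uxyy al be x y t) = 0.
Proof.
  intros Ht. rewrite <- (D2_const0 L B). unfold D2. apply RInt_ext. intros x Hx.
  rewrite Rmin_left, Rmax_right in Hx by lra.
  rewrite (RInt_const (V := R_CompleteNormedModule)). simpl. rewrite Rmult_0_r.
  apply is_RInt_unique.
  replace 0 with (minus (Qf u uxy al be x B t) (Qf u uxy al be x (- B) t)).
  - apply (is_RInt_derive (V := R_CompleteNormedModule) (fun s => Qf u uxy al be x s t)).
    + intros; apply dQy.
    + intros. apply (C2_c2 (fun x y => Qyf u uy uxy uxyy al be x y t)).
      apply C2_slice. apply cQy.
  - unfold Qf. destruct (Hbc1 x t ltac:(lra) Ht) as [h1 h2]. rewrite h1, h2.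
    unfold minus, plus, opp; simpl. ring.
Qed.

Lemma D2Px_ge0 al be t : 0 <= al -> 0 <= t -> 0 <= D2 L B (fun x y => Pxf u ux uxx uxxx uy uxy al be x y t).
Proof.
  intros Hal Ht. unfold D2.
  rewrite (fubini (fun x y => Pxf u ux uxx uxxx uy uxy al be x y t)) by (auto; apply C2_slice; apply cPx).
  apply Rle_trans with (RInt (fun _ : R => 0) (- B) B); [rewrite RInt0; lra|].
  apply RInt_le; [lra| | |].
  { apply (@ex_RInt_continuous R_CompleteNormedModule). intros; apply continuous_const. }
  { apply (@ex_RInt_continuous R_CompleteNormedModule). intros.
    apply (C2_cont_inner' (fun x y => Pxf u ux uxx uxxx uy uxy al be x y t)).
    apply C2_slice; apply cPx. }
  intros y Hy.
  rewrite (is_RInt_unique _ 0 L (minus (Pf u ux uxx uy al be L y t) (Pf u ux uxx uy al be 0 y t))).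
  2:{ apply (is_RInt_derive (V := R_CompleteNormedModule) (fun s => Pf u ux uxx uy al be s y t)).
      + intros; apply dPx.
      + intros. apply (C2_c1 (fun x y => Pxf u ux uxx uxxx uy uxy al be x y t)).
        apply C2_slice. apply cPx. }
  destruct (Hbc2 y t ltac:(lra) Ht) as [h0 [hL hxL]].
  assert (hyL : uy L y t = 0).
  { apply (deriv_zero_loc (fun z => u L z t) (- B) B y); auto.
    - intros; apply Hbc2; auto.
    - apply is_derive_Reals; apply Hdy1. }
  assert (hy0 : uy 0 y t = 0).
  { apply (deriv_zero_loc (fun z => u 0 z t) (- B) B y); auto.
    - intros; apply Hbc2; auto.
    - apply is_derive_Reals; apply Hdy1. }
  unfold Pf, minus, plus, opp; simpl. rewrite h0, hL, hxL, hyL, hy0.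
  pose proof (Rle_0_sqr (ux 0 y t)). unfold Rsqr in H. nra.
Qed.

Lemma energy al be t : 0 <= al -> 0 < t ->
  D2 L B (fun x y => (al + be * x) * (ut x y t * u x y t + u x y t * ut x y t))
  <= 2 * be * D2 L B (fun x y => Rf u ux uy x y t).
Proof.
  intros Hal Ht.
  rewrite (D2_ext L B _ (fun x y => (2 * be) * Rf u ux uy x y t +
     (-2) * (1 * Pxf u ux uxx uxxx uy uxy al be x y t + 1 * Qyf u uy uxy uxyy al be x y t))); auto.
  2:{ intros x y Hx Hy. pose proof (Heq x y t Hx Hy Ht) as E.
      unfold Pxf, Qyf.
      replace (ut x y t) with (- (ux x y t + (u x y t) ^ 2 * ux x y t + uxxx x y t + uxyy x y t)) by lra.
      ring. }
  rewrite D2_lin.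
  - rewrite (D2_lin L B (fun x y => Pxf u ux uxx uxxx uy uxy al be x y t) (fun x y => Qyf u uy uxy uxyy al be x y t) 1 1).
    + rewrite D2Qy0 by lra. pose proof (D2Px_ge0 al be t Hal ltac:(lra)). nra.
    + apply C2_slice; apply cPx.
    + apply C2_slice; apply cQy.
  - apply C2_slice; apply cR.
  - unfold C2. apply cont3_plus; apply cont3_mult; try apply cont3_const.
    + apply cont3_slice3; apply cPx.
    + apply cont3_slice3; apply cQy.
Qed.
End Energy.

Lemma cont3_ext f g : (forall x y t, f x y t = g x y t) -> cont3 f -> cont3 g.
Proof.
  intros E H x y t eps He. destruct (H x y t eps He) as [d [Hd H']].
  exists d; split; auto. intros. rewrite <- !E. auto.
Qed.

Lemma IntOmega_closed L B F G : 0 < L -> 0 < B -> C2 G ->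
  (forall x y, 0 <= x <= L -> - B <= y <= B -> F x y = G x y) ->
  IntOmega L B F = D2 L B G.
Proof.
  intros HL HB HG E. unfold IntOmega, D2.
  assert (Ei : forall x, 0 <= x <= L -> Integ (fun y => F x y) (- B) B = RInt (fun y => G x y) (- B) B).
  { intros x Hx.
    assert (Hex : ex_RInt (fun y => F x y) (- B) B).
    { eapply ex_RInt_ext; [|apply (C2_ex2 G x); auto]. intros y Hy.
      rewrite Rmin_left, Rmax_right in Hy by lra. symmetry; apply E; lra. }
    rewrite Integ_RInt; auto. apply RInt_ext. intros y Hy.
    rewrite Rmin_left, Rmax_right in Hy by lra. apply E; lra. }
  assert (Hex : ex_RInt (fun x => Integ (fun y => F x y) (- B) B) 0 L).
  { eapply ex_RInt_ext; [|apply (C2_ex_outer G); auto]. intros x Hx.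
    rewrite Rmin_left, Rmax_right in Hx by lra. symmetry; apply Ei; lra. }
  rewrite Integ_RInt; auto. apply RInt_ext. intros x Hx.
  rewrite Rmin_left, Rmax_right in Hx by lra. apply Ei; lra.
Qed.

Lemma nonincr (f f' : R -> R) : (forall t, is_derive f t (f' t)) -> (forall t, 0 < t -> f' t <= 0) ->
  forall t, 0 <= t -> f t <= f 0.
Proof.
  intros Hd Hn t Ht. destruct (Rle_lt_or_eq_dec 0 t Ht) as [Hp|He]; [|subst; lra].
  destruct (MVT_cor2 f f' 0 t Hp) as [c [Hc1 Hc2]].
  - intros c _. apply is_derive_Reals. apply Hd.
  - pose proof (Hn c ltac:(lra)). nra.
Qed.

Lemma arith N Nx Ny Q4 W' dl A2 P X Y : 0 < P -> 0 < X -> 0 < Y -> 0 <= N -> N <= dl ->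
  dl * (2 * P * (X + Y)) < A2 -> 2 * A2 = P * (3 * X + Y) - 1 ->
  P * X * N <= Nx -> P * Y * N <= Ny -> Q4 <= N * (Nx + Ny) / 2 ->
  W' <= N + Q4 / 2 - 3 * Nx - Ny -> W' <= - A2 * N.
Proof.
  intros HP HX HY HN HNd Hd HA H1 H2 HQ HW.
  assert (HPXY : 0 < P * (X + Y)) by nra.
  assert (Hdl : dl < 3 / 4).
  { assert (dl * (2 * P * (X + Y)) < 3 / 4 * (2 * P * (X + Y))) by nra. nra. }
  assert (S1 : W' <= N - (3 - N / 4) * Nx - (1 - N / 4) * Ny) by nra.
  assert (S2 : (3 - N / 4) * (P * X * N) <= (3 - N / 4) * Nx) by (apply Rmult_le_compat_l; lra).
  assert (S3 : (1 - N / 4) * (P * Y * N) <= (1 - N / 4) * Ny) by (apply Rmult_le_compat_l; lra).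
  assert (S4 : N * N * (P * (X + Y)) <= N * dl * (P * (X + Y))).
  { apply Rmult_le_compat_r; [lra|]. apply Rmult_le_compat_l; lra. }
  assert (S5 : N * dl * (P * (X + Y)) <= N * (A2 / 2)).
  { assert (dl * (P * (X + Y)) <= A2 / 2) by nra. rewrite Rmult_assoc. apply Rmult_le_compat_l; auto. }
  assert (HA2 : 0 <= A2) by nra.
  nra.
Qed.

Definition hf (al be : R) (u : R -> R -> R -> R) (x y t : R) := (al + be * x) * (u x y t * u x y t).
Definition htf (al be : R) (u ut : R -> R -> R -> R) (x y t : R) :=
  (al + be * x) * (ut x y t * u x y t + u x y t * ut x y t).

Lemma dt_hf al be u ut : dt_is u ut -> dt_is (hf al be u) (htf al be u ut).
Proof.
  intros Hd x y t. apply is_derive_Reals.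
  assert (H1 : forall s, is_derive (fun z => u x y z) s (ut x y s)) by (intros; apply is_derive_Reals; apply Hd).
  unfold hf. eapply D_val.
  - dtac ltac:(idtac; lazymatch goal with | |- is_derive (fun s => u _ _ s) _ _ => apply H1 | |- is_derive (u _ _) _ _ => apply H1 end).
  - cbv beta. unfold htf. apply eqR. ring.
Qed.


Lemma sq_nonneg (r : R) : 0 <= r * r.
Proof. pose proof (Rle_0_sqr r). unfold Rsqr in H. exact H. Qed.

Lemma hw1 x a : 0 < x -> (1 + 0 * x) * (a * a) <= (1 + 1 * x) * (a * a).
Proof. intros. pose proof (sq_nonneg a). nra. Qed.
Lemma hw2 x a L : x < L -> 0 < x -> (1 + 1 * x) * (a * a) <= (1 + L) * ((1 + 0 * x) * (a * a)).
Proof. intros. pose proof (sq_nonneg a). nra. Qed.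
Lemma hw3 x a : 0 <= (1 + 0 * x) * (a * a).
Proof. pose proof (sq_nonneg a). nra. Qed.

Lemma final_step c W N A2 L D : 0 < L -> 0 <= A2 -> c = A2 / (1 + L) -> W <= (1 + L) * N -> 0 <= N ->
  D <= - A2 * N -> D <= - c * W.
Proof.
  intros HL HA Hc HW HN HD. subst c.
  apply Rle_trans with (- A2 * N); auto.
  replace (- (A2 / (1 + L)) * W) with (- A2 * (W / (1 + L))) by (field; lra).
  apply Ropp_le_cancel. rewrite !Ropp_mult_distr_l_reverse, !Ropp_involutive.
  apply Rmult_le_compat_l; [lra|].
  apply Rmult_le_reg_r with (1 + L); [lra|]. replace (W / (1 + L) * (1 + L)) with W by (field; lra). lra.
Qed.

Lemma gron_step e c W D : 0 < e -> 0 <= c -> D <= - c * W -> c * e * W + e * D <= 0.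
Proof.
  intros He Hc HD.
  assert (e * D <= e * (- c * W)) by (apply Rmult_le_compat_l; lra). nra.
Qed.

Theorem theorem5p1
  (L B A : R) (u0 : R -> R -> R)
  (u ut ux uxx uxxx uy uyy uxy uxyy : R -> R -> R -> R) :
  0 < L -> 0 < B ->
  2 * A ^ 2 = PI ^ 2 * (3 / L ^ 2 + 1 / (4 * B ^ 2)) - 1 ->
  0 < 2 * A ^ 2 ->
  norm2 L B u0 < A ^ 2 / (2 * PI ^ 2 * (1 / L ^ 2 + 1 / (4 * B ^ 2))) ->
  dt_is u ut -> dx_is u ux -> dx_is ux uxx -> dx_is uxx uxxx ->
  dy_is u uy -> dy_is uy uyy -> dx_is uy uxy -> dy_is ux uxy ->
  dx_is uyy uxyy -> dy_is uxy uxyy ->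
  cont3 u -> cont3 ut -> cont3 ux -> cont3 uxx -> cont3 uxxx ->
  cont3 uy -> cont3 uyy -> cont3 uxy -> cont3 uxyy ->
  (exists M, forall t, 0 <= t ->
     norm2 L B (fun x y => u x y t) + norm2 L B (fun x y => ux x y t)
     + norm2 L B (fun x y => uy x y t) <= M) ->
  (forall x y t, 0 < x < L -> - B < y < B -> 0 < t ->
     ut x y t + ux x y t + (u x y t) ^ 2 * ux x y t + uxxx x y t
     + uxyy x y t = 0) ->
  (forall x t, 0 <= x <= L -> 0 <= t -> u x B t = 0 /\ u x (- B) t = 0) ->
  (forall y t, - B <= y <= B -> 0 <= t ->
     u 0 y t = 0 /\ u L y t = 0 /\ ux L y t = 0) ->
  (forall x y, 0 <= x <= L -> - B <= y <= B -> u x y 0 = u0 x y) ->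
  forall t, 0 <= t ->
    norm2 L B (fun x y => u x y t) <= wnorm2 L B (fun x y => u x y t) /\
    wnorm2 L B (fun x y => u x y t)
      <= exp (- (A ^ 2 / (1 + L)) * t) * wnorm2 L B u0.
Proof.
  intros HL HB HA HA0 Hu0 Hdt Hdx1 Hdx2 Hdx3 Hdy1 Hdy2 Hdxy Hdyx Hdxyy Hdyxy
    Cu Cut Cux Cuxx Cuxxx Cuy Cuyy Cuxy Cuxyy HM Heq Hbc1 Hbc2 Hinit t Ht.
  set (A2 := A ^ 2) in *.
  assert (Ch : forall al be, cont3 (hf al be u)) by (intros; unfold hf; ctac).
  assert (Cht : forall al be, cont3 (htf al be u ut)) by (intros; unfold htf; ctac).
  assert (CS : forall al be s, C2 (fun x y => hf al be u x y s)).
  { intros. apply (C2_slice (hf al be u)). apply Ch. }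
  set (N := fun s => D2 L B (fun x y => hf 1 0 u x y s)).
  set (W := fun s => D2 L B (fun x y => hf 1 1 u x y s)).
  assert (dN : forall s, is_derive N s (D2 L B (fun x y => htf 1 0 u ut x y s))).
  { intros s. apply (dD2 L B (hf 1 0 u) (htf 1 0 u ut) s); [apply Ch|apply Cht|apply dt_hf; exact Hdt]. }
  assert (dW : forall s, is_derive W s (D2 L B (fun x y => htf 1 1 u ut x y s))).
  { intros s. apply (dD2 L B (hf 1 1 u) (htf 1 1 u ut) s); [apply Ch|apply Cht|apply dt_hf; exact Hdt]. }
  pose proof (energy L B u ut ux uxx uxxx uy uxy uxyy HL HB) as E1.
  pose proof (E1 Hdx1 Hdx2 Hdx3 Hdy1 Hdxy Hdyxy) as E2.
  pose proof (E2 Cu Cux Cuxxx Cuy Cuxy Cuxyy) as E3.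
  pose proof (E3 Heq) as E4.
  pose proof (E4 Hbc1 Hbc2) as EN. clear E1 E2 E3 E4.
  assert (En : forall s, 0 < s -> D2 L B (fun x y => htf 1 0 u ut x y s) <= 2 * 0 * D2 L B (fun x y => Rf u ux uy x y s)).
  { intros s Hs. pose proof (EN 1 0 s) as E6. specialize (E6 Rle_0_1 Hs). unfold htf. exact E6. }
  assert (Ew : forall s, 0 < s -> D2 L B (fun x y => htf 1 1 u ut x y s) <= 2 * 1 * D2 L B (fun x y => Rf u ux uy x y s)).
  { intros s Hs. pose proof (EN 1 1 s) as E6. specialize (E6 Rle_0_1 Hs). unfold htf. exact E6. }
  assert (norm_eq : forall s, norm2 L B (fun x y => u x y s) = N s).
  { intros s. unfold norm2, N. apply IntOmega_closed; [exact HL|exact HB|apply CS|].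
    intros. unfold hf. ring. }
  assert (wnorm_eq : forall s, wnorm2 L B (fun x y => u x y s) = W s).
  { intros s. unfold wnorm2, W. apply IntOmega_closed; [exact HL|exact HB|apply CS|].
    intros. unfold hf. ring. }
  assert (norm0 : norm2 L B u0 = N 0).
  { unfold norm2, N. apply IntOmega_closed; [exact HL|exact HB|apply CS|].
    intros x y Hx Hy. unfold hf. rewrite (Hinit x y Hx Hy). ring. }
  assert (wnorm0 : wnorm2 L B u0 = W 0).
  { unfold wnorm2, W. apply IntOmega_closed; [exact HL|exact HB|apply CS|].
    intros x y Hx Hy. unfold hf. rewrite (Hinit x y Hx Hy). ring. }
  assert (NW : forall s, N s <= W s).
  { intros s. unfold N, W. apply D2_le; [exact HL|exact HB|apply CS|apply CS|].
    intros x y Hx Hy. apply hw1; apply Hx. }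
  assert (WN : forall s, W s <= (1 + L) * N s).
  { intros s. unfold N, W. rewrite <- D2_scal by apply CS.
    apply D2_le; [exact HL|exact HB|apply CS| |].
    - unfold C2. apply cont3_mult; [apply cont3_const|]. apply cont3_slice3. apply Ch.
    - intros x y Hx Hy. apply hw2; apply Hx. }
  assert (Nge0 : forall s, 0 <= N s).
  { intros s. unfold N. apply D2_ge0; [exact HL|exact HB|apply CS|].
    intros. apply hw3. }
  assert (Ndecr : forall s, 0 <= s -> N s <= N 0).
  { apply (nonincr N (fun s => D2 L B (fun x y => htf 1 0 u ut x y s))); [exact dN|].
    intros s Hs. pose proof (En s Hs). lra. }
  split.
  { rewrite norm_eq, wnorm_eq. apply NW. }
  rewrite wnorm_eq, wnorm0.
  set (c := A2 / (1 + L)).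
  assert (HA2 : 0 <= A2) by lra.
  assert (Hc : 0 <= c). { unfold c. apply Rdiv_le_0_compat; lra. }
  assert (Wd : forall s, 0 < s -> D2 L B (fun x y => htf 1 1 u ut x y s) <= - c * W s).
  { intros s Hs.
    set (F := fun x y => u x y s). set (Fx := fun x y => ux x y s). set (Fy := fun x y => uy x y s).
    assert (CF : C2 F) by (apply C2_slice; exact Cu).
    assert (CFx : C2 Fx) by (apply C2_slice; exact Cux).
    assert (CFy : C2 Fy) by (apply C2_slice; exact Cuy).
    assert (HdX : forall x y, is_derive (fun z => F z y) x (Fx x y)).
    { intros; apply is_derive_Reals; apply Hdx1. }
    assert (HdY : forall x y, is_derive (fun z => F x z) y (Fy x y)).
    { intros; apply is_derive_Reals; apply Hdy1. }
    assert (Hbx : forall y, - B <= y <= B -> F 0 y = 0 /\ F L y = 0).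
    { intros y Hy. destruct (Hbc2 y s Hy ltac:(lra)) as [h1 [h2 _]]. unfold F. split; [exact h1|exact h2]. }
    assert (Hby : forall x, 0 <= x <= L -> F x B = 0 /\ F x (- B) = 0).
    { intros x Hx. apply (Hbc1 x s Hx ltac:(lra)). }
    pose proof (poinc_x L B F Fx HL HB CF CFx HdX Hbx) as PX.
    pose proof (poinc_y L B F Fy HL HB CF CFy HdY Hby) as PY.
    pose proof (lady L B F Fx Fy HL HB CF CFx CFy HdX HdY Hbx Hby) as LD.
    set (NN := D2 L B (fun x y => F x y * F x y)) in *.
    set (Nx := D2 L B (fun x y => Fx x y * Fx x y)) in *.
    set (Ny := D2 L B (fun x y => Fy x y * Fy x y)) in *.
    set (Q4 := D2 L B (fun x y => F x y * F x y * (F x y * F x y))) in *.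
    assert (C2a : C2 (fun x y => F x y * F x y)) by (unfold C2 in *; ctac).
    assert (C2b : C2 (fun x y => F x y * F x y * (F x y * F x y))) by (unfold C2 in *; ctac).
    assert (C2c : C2 (fun x y => Fx x y * Fx x y)) by (unfold C2 in *; ctac).
    assert (C2d : C2 (fun x y => Fy x y * Fy x y)) by (unfold C2 in *; ctac).
    assert (RE : D2 L B (fun x y => Rf u ux uy x y s) = (1/2) * NN + ((1/4) * Q4 + ((- (3/2)) * Nx + (- (1/2)) * Ny))).
    { rewrite (D2_ext L B _ (fun x y => (1/2) * (F x y * F x y) + 1 * ((1/4) * (F x y * F x y * (F x y * F x y))
            + 1 * ((- (3/2)) * (Fx x y * Fx x y) + (- (1/2)) * (Fy x y * Fy x y))))); [|exact HL|exact HB|].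
      2:{ intros. unfold Rf, F, Fx, Fy. ring. }
      rewrite D2_lin; [|exact C2a|].
      2:{ unfold C2 in *. apply cont3_plus; apply cont3_mult; try apply cont3_const; [exact C2b|].
          apply cont3_plus; apply cont3_mult; try apply cont3_const; [exact C2c|exact C2d]. }
      rewrite D2_lin; [|exact C2b|].
      2:{ unfold C2 in *. apply cont3_plus; apply cont3_mult; try apply cont3_const; [exact C2c|exact C2d]. }
      rewrite D2_lin; [|exact C2c|exact C2d]. fold NN Q4 Nx Ny. ring. }
    assert (NNe : NN = N s).
    { unfold NN, N. apply D2_ext; [exact HL|exact HB|]. intros. unfold hf, F. ring. }
    set (P := PI ^ 2). set (X := 1 / L ^ 2). set (Y := 1 / (4 * B ^ 2)).
    assert (HP : 0 < P). { unfold P. apply pow_lt. apply PI_RGT_0. }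
    assert (HX : 0 < X). { unfold X. apply Rdiv_lt_0_compat; [lra|]. apply pow_lt; exact HL. }
    assert (HY : 0 < Y). { unfold Y. apply Rdiv_lt_0_compat; [lra|]. apply Rmult_lt_0_compat; [lra|]. apply pow_lt; exact HB. }
    assert (PXe : PI / L * (PI / L) = P * X). { unfold P, X. field. lra. }
    assert (PYe : PI / (2 * B) * (PI / (2 * B)) = P * Y). { unfold P, Y. field. lra. }
    rewrite PXe in PX. rewrite PYe in PY.
    assert (HA' : 2 * A2 = P * (3 * X + Y) - 1).
    { rewrite HA. unfold P, X, Y. field. split; lra. }
    assert (Hden : 0 < 2 * P * (X + Y)) by (apply Rmult_lt_0_compat; lra).
    assert (Hu0' : norm2 L B u0 < A2 / (2 * P * (X + Y))) by (unfold P, X, Y; exact Hu0).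
    assert (Hd' : norm2 L B u0 * (2 * P * (X + Y)) < A2).
    { pose proof (Rmult_lt_compat_r (2 * P * (X + Y)) _ _ Hden Hu0') as H5.
      replace (A2 / (2 * P * (X + Y)) * (2 * P * (X + Y))) with A2 in H5 by (field; lra). exact H5. }
    assert (HNd : NN <= norm2 L B u0).
    { rewrite norm0, NNe. apply Ndecr. lra. }
    pose proof (Ew s Hs) as Es. rewrite RE in Es.
    assert (Wd' : D2 L B (fun x y => htf 1 1 u ut x y s) <= - A2 * NN).
    { apply (arith NN Nx Ny Q4 _ (norm2 L B u0) A2 P X Y HP HX HY); try assumption.
      - rewrite NNe. apply Nge0.
      - lra. }
    rewrite NNe in Wd'.
    apply (final_step c (W s) (N s) A2 L); [exact HL|exact HA2|reflexivity|apply WN|apply Nge0|exact Wd']. }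
  set (g := fun s => exp (c * s) * W s).
  assert (dg : forall s, is_derive g s (c * exp (c * s) * W s + exp (c * s) * D2 L B (fun x y => htf 1 1 u ut x y s))).
  { intros s. unfold g. eapply D_val. apply D_mult; [|apply dW].
    - assert (H : is_derive (fun s => exp (c * s)) s (c * exp (c * s))).
      { auto_derive; [exact I|]. ring. }
      exact H.
    - reflexivity. }
  pose proof (nonincr g _ dg) as Hg.
  assert (Hgt : g t <= g 0).
  { apply Hg; [|exact Ht]. intros s Hs. apply gron_step; [apply exp_pos|exact Hc|]. apply Wd; exact Hs. }
  unfold g in Hgt. rewrite Rmult_0_r, exp_0, Rmult_1_l in Hgt.
  fold A2. fold c.
  replace (W t) with (exp (- c * t) * (exp (c * t) * W t)).
  2:{ rewrite <- Rmult_assoc, <- exp_plus. replace (- c * t + c * t) with 0 by ring. rewrite exp_0. ring. }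
  apply Rmult_le_compat_l; [left; apply exp_pos|exact Hgt].
Qed.
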